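(* Let $A$ be a ring and let $J$ be either the prime radical, the upper nilradical, or the Jacobson radical of $A$. If $\varphi: A \to A$ is a surjective ring endomorphism and $A/J$ is Hopfian, then $\ker\varphi \subseteq J$.
   Context: The prime radical of $A$ is the intersection of all prime ideals of $A$; the upper nilradical is the largest nil two-sided ideal of $A$; the Jacobson radical is the intersection of all maximal left ideals of $A$. A ring $R$ is \emph{Hopfian} if $R$ is not isomorphic (as a ring) to $R/I$ for any nonzero two-sided ideal $I \triangleleft R$; equivalently, every surjective ring endomorphism of $R$ is injective. *)

(* Defs.v *)
(* Rings are unital, not necessarily commutative; the zero
   ring is allowed (pzRingType). Subsets of a ring are Prop-valued predicates. *)
From HB Require Import structures.
From mathcomp Require Import all_boot all_order all_algebra.
Set Implicit Arguments. Unset Strict Implicit. Unset Printing Implicit Defensive.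
Import GRing.Theory.
Local Open Scope ring_scope.

Section RingDefs.
Variable A : pzRingType.

Definition additive_subgroup (I : A -> Prop) : Prop :=
  I 0 /\ (forall x y, I x -> I y -> I (x + y)) /\ (forall x, I x -> I (- x)).

Definition left_ideal (I : A -> Prop) : Prop :=
  additive_subgroup I /\ (forall r x, I x -> I (r * x)).

Definition two_sided_ideal (I : A -> Prop) : Prop :=
  additive_subgroup I /\ (forall r x, I x -> I (r * x))
                      /\ (forall r x, I x -> I (x * r)).

Definition proper_set (I : A -> Prop) : Prop := exists x, ~ I x.

Definition prime_ideal (P : A -> Prop) : Prop :=
  two_sided_ideal P /\ proper_set P /\
  (forall a b, (forall r, P (a * r * b)) -> P a \/ P b).

Definition maximal_left_ideal (M : A -> Prop) : Prop :=
  left_ideal M /\ proper_set M /\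
  (forall N, left_ideal N -> proper_set N -> (forall x, M x -> N x) ->
     forall x, N x -> M x).

Definition prime_radical (x : A) : Prop :=
  forall P, prime_ideal P -> P x.

Definition jacobson_radical (x : A) : Prop :=
  forall M, maximal_left_ideal M -> M x.

Definition nil_set (I : A -> Prop) : Prop :=
  forall x, I x -> exists n : nat, x ^+ n = 0.

Definition is_upper_nilradical (J : A -> Prop) : Prop :=
  two_sided_ideal J /\ nil_set J /\
  (forall I, two_sided_ideal I -> nil_set I -> forall x, I x -> J x).

End RingDefs.

Definition surjective_fun (X Y : Type) (f : X -> Y) : Prop :=
  forall y, exists x, f x = y.

Definition hopfian (R : pzRingType) : Prop :=
  forall f : {rmorphism R -> R}, surjective_fun f -> injective f.

(* Main.v *)
Require Import Defs.
From HB Require Import structures.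
From mathcomp Require Import all_boot all_order all_algebra.
Import GRing.Theory.
Local Open Scope ring_scope.

Section Induced.
Variables (A B : pzRingType) (J : A -> Prop).
Variable phi : {rmorphism A -> A}.
Variable pi : {rmorphism A -> B}.
Hypothesis pi_surj : surjective_fun pi.
Hypothesis pi_ker : forall x, pi x = 0 <-> J x.
Hypothesis phiJ : forall x, J x -> J (phi x).

Lemma ex_pre (b : B) : exists a, pi a == b.
Proof. by have [a ha] := pi_surj b; exists a; apply/eqP. Qed.

Definition pre (b : B) : A := xchoose (ex_pre b).
Lemma preK b : pi (pre b) = b.
Proof. exact/eqP/(xchooseP (ex_pre b)). Qed.

Definition psi (b : B) : B := pi (phi (pre b)).

Lemma psi_pi a : psi (pi a) = pi (phi a).
Proof.
rewrite /psi; apply/eqP; rewrite -subr_eq0 -!rmorphB; apply/eqP/pi_ker/phiJ/pi_ker.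
by rewrite rmorphB preK subrr.
Qed.

Lemma psi_zmod : zmod_morphism psi.
Proof.
move=> x y; have [a <-] := pi_surj x; have [c <-] := pi_surj y.
by rewrite -rmorphB !psi_pi !rmorphB.
Qed.

Lemma psi_mon : monoid_morphism psi.
Proof.
split; first by rewrite -(rmorph1 pi) psi_pi !rmorph1.
move=> x y; have [a <-] := pi_surj x; have [c <-] := pi_surj y.
by rewrite -rmorphM !psi_pi !rmorphM.
Qed.

HB.instance Definition _ := GRing.isZmodMorphism.Build B B psi psi_zmod.
HB.instance Definition _ := GRing.isMonoidMorphism.Build B B psi psi_mon.

Lemma key (phi_surj : surjective_fun phi) (hB : hopfian B) :
  forall x, phi x = 0 -> J x.
Proof.
have sur : surjective_fun psi.
  move=> y; have [a <-] := pi_surj y; have [c <-] := phi_surj a.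
  by exists (pi c); rewrite psi_pi.
move=> x hx; apply/pi_ker; apply: (hB psi sur).
rewrite /= !rmorph0.
by move: (psi_pi x); rewrite hx !rmorph0.
Qed.
End Induced.

Section Cases.
Variable A : pzRingType.
Variable phi : {rmorphism A -> A}.
Hypothesis phi_surj : surjective_fun phi.

Lemma prime_pre (P : A -> Prop) : prime_ideal P -> prime_ideal (fun x => P (phi x)).
Proof.
move=> [[[P0 [PD PN]] [PL PR]] [[y hy] Pp]].
split; [split; [split; [by rewrite rmorph0|split]|split]|split].
- by move=> x z hx hz; rewrite rmorphD; apply: PD.
- by move=> x hx; rewrite rmorphN; apply: PN.
- by move=> r x hx; rewrite rmorphM; apply: PL.
- by move=> r x hx; rewrite rmorphM; apply: PR.
- by have [x hx] := phi_surj y; exists x; rewrite hx.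
- move=> a b h; apply: Pp => r; have [s <-] := phi_surj r.
  by rewrite -!rmorphM.
Qed.

Lemma max_pre (M : A -> Prop) : maximal_left_ideal M ->
  maximal_left_ideal (fun x => M (phi x)).
Proof.
move=> [[[M0 [MD MN]] ML] [[y hy] Mm]].
split; [split; [split; [by rewrite rmorph0|split]|]|split].
- by move=> x z hx hz; rewrite rmorphD; apply: MD.
- by move=> x hx; rewrite rmorphN; apply: MN.
- by move=> r x hx; rewrite rmorphM; apply: ML.
- by have [x hx] := phi_surj y; exists x; rewrite hx.
move=> N [[N0 [ND NN]] NL] [w hw] sub z hz.
pose N' := fun y => exists x, N x /\ phi x = y.
apply: (Mm N').
- split; [split; [exists 0; split => //; exact: rmorph0|split]|].
  + by move=> _ _ [a [ha <-]] [b [hb <-]]; exists (a + b); rewrite rmorphD; split => //; apply: ND.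
  + by move=> _ [a [ha <-]]; exists (- a); rewrite rmorphN; split => //; apply: NN.
  + move=> r _ [a [ha <-]]; have [s <-] := phi_surj r.
    by exists (s * a); rewrite rmorphM; split => //; apply: NL.
- exists 1 => -[x [hx h1]]; apply: hw.
  have h1x : N (1 - x) by apply: sub; rewrite rmorphB h1 rmorph1 subrr.
  have : N (w * ((1 - x) + x)) by apply: NL; apply: ND.
  by rewrite subrK mulr1.
- by move=> m hm; have [x hx] := phi_surj m; exists x; split => //; apply: sub; rewrite hx.
- by exists z.
Qed.
End Cases.

Lemma phiJ_all (A : pzRingType) (J : A -> Prop)
  (hJ : (forall x, J x <-> prime_radical x)
        \/ is_upper_nilradical J
        \/ (forall x, J x <-> jacobson_radical x))
  (phi : {rmorphism A -> A}) (phi_surj : surjective_fun phi) :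
  forall x, J x -> J (phi x).
Proof.
case: hJ => [hJ|[hJ|hJ]] x.
- move=> /hJ hx; apply/hJ => P hP; exact: (hx _ (@prime_pre A phi phi_surj P hP)).
- case: hJ => [[[J0 [JD JN]] [JL JR]] [Jnil Jmax]] hx.
  pose I := fun y => exists x, J x /\ phi x = y.
  apply: (Jmax I); last by exists x.
  + split; [split; [exists 0; split => //; exact: rmorph0|split]|split].
    * by move=> _ _ [a [ha <-]] [b [hb <-]]; exists (a + b); rewrite rmorphD; split => //; apply: JD.
    * by move=> _ [a [ha <-]]; exists (- a); rewrite rmorphN; split => //; apply: JN.
    * move=> r _ [a [ha <-]]; have [s <-] := phi_surj r.
      by exists (s * a); rewrite rmorphM; split => //; apply: JL.
    * move=> r _ [a [ha <-]]; have [s <-] := phi_surj r.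
      by exists (a * s); rewrite rmorphM; split => //; apply: JR.
  + move=> _ [a [ha <-]]; have [n hn] := Jnil a ha.
    by exists n; rewrite -rmorphXn hn rmorph0.
- move=> /hJ hx; apply/hJ => M hM; exact: (hx _ (@max_pre A phi phi_surj M hM)).
Qed.

Theorem mainTheorem9 (A : pzRingType) (J : A -> Prop)
  (hJ : (forall x, J x <-> prime_radical x)
        \/ is_upper_nilradical J
        \/ (forall x, J x <-> jacobson_radical x))
  (phi : {rmorphism A -> A}) (phi_surj : surjective_fun phi)
  (B : pzRingType) (pi : {rmorphism A -> B}) (pi_surj : surjective_fun pi)
  (pi_ker : forall x, pi x = 0 <-> J x)
  (hB : hopfian B) :
  forall x, phi x = 0 -> J x.
Proof.
exact: (@key A B J phi pi pi_surj pi_ker (@phiJ_all A J hJ phi phi_surj) phi_surj hB).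
Qed.
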